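(* For every integer $m\geq 5$ there exist a ranking profile $R$ over $m$ candidates and a ranking $\succ\in\mathcal{R}$ such that $R(\succ)=\frac{m}{5}\big/\binom{m}{2}$ and every ranking $\rhd$ chosen by the Squared Kemeny rule for $R$ (i.e., every minimizer of $\sum_{\succ'\in\mathcal{R}}R(\succ')\,\mathit{swap}(\succ',\rhd)^2$, under any tie-breaking) satisfies $u(\succ,\rhd)=0$.
   Context: Let $C=\{x_1,\dots,x_m\}$ be a set of $m$ candidates. A ranking is a strict linear order over $C$; $\mathcal{R}$ denotes the set of all rankings over $C$. A ranking profile is a function $R:\mathcal{R}\to[0,1]$ with $\sum_{\succ\in\mathcal{R}}R(\succ)=1$. For rankings $\succ,\rhd$, the utility is $u(\succ,\rhd)=|\{(x,y)\in C^2: x\succ y \text{ and } x\rhd y\}|$ and the swap distance is $\mathit{swap}(\succ,\rhd)=|\{(x,y)\in C^2: x\succ y\text{ and } y\rhd x\}|=\binom{m}{2}-u(\succ,\rhd)$. The Squared Kemeny rule chooses a ranking $\rhd\in\mathcal{R}$ minimizing $\sum_{\succ\in\mathcal{R}}R(\succ)\,\mathit{swap}(\succ,\rhd)^2$. *)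

(* Defs.v *)
From HB Require Import structures.
From mathcomp Require Import all_boot all_order all_algebra all_fingroup.
From mathcomp Require Import reals.
Set Implicit Arguments. Unset Strict Implicit. Unset Printing Implicit Defensive.
Import Order.TTheory GRing.Theory Num.Theory.
Local Open Scope ring_scope.

(* A ranking (strict linear order over 'I_m) is
   represented by the bijection r : {perm 'I_m} sending each candidate to its
   position (0 = top); x is preferred to y in r iff r x < r y.  This is a
   bijection between permutations and strict linear orders on 'I_m. *)
Definition ranking (m : nat) := {perm 'I_m}.

Definition prefers m (r : ranking m) (x y : 'I_m) : bool := (r x < r y)%N.

Definition utility m (s t : ranking m) : nat :=
  #|[set p : 'I_m * 'I_m | prefers s p.1 p.2 && prefers t p.1 p.2]|.

Definition swap_dist m (s t : ranking m) : nat :=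
  #|[set p : 'I_m * 'I_m | prefers s p.1 p.2 && prefers t p.2 p.1]|.

Definition is_profile (F : realType) m (P : {ffun ranking m -> F}) : Prop :=
  (forall r, 0 <= P r <= 1) /\ \sum_(r : ranking m) P r = 1.

Definition sqkemeny_cost (F : realType) m (P : {ffun ranking m -> F})
    (t : ranking m) : F :=
  \sum_(s : ranking m) P s * ((swap_dist s t) ^ 2)%N%:R.

(* t is chosen by Squared Kemeny (under some tie-breaking) iff it minimizes. *)
Definition sqkemeny_winner (F : realType) m (P : {ffun ranking m -> F})
    (t : ranking m) : Prop :=
  forall t' : ranking m, sqkemeny_cost P t <= sqkemeny_cost P t'.

(* Main.v *)
Require Import Defs.
From HB Require Import structures.
From mathcomp Require Import all_boot all_order all_algebra all_fingroup.
From mathcomp Require Import reals.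
From mathcomp Require Import zify ring lra.
Import Order.TTheory GRing.Theory Num.Theory.
Local Open Scope ring_scope.

Section Gen.
Variable F : realType.
Variable m : nat.
Implicit Types a b t : ranking m.

Definition fw (x y : 'I_m) : F := (x < y)%N%:R.
Definition E a (x y : 'I_m) : F := (prefers a y x)%:R.

Lemma prefers_irr a x : prefers a x x = false.
Proof. by rewrite /prefers ltnn. Qed.

Lemma prefers_asym a x y : x != y -> prefers a x y = ~~ prefers a y x.
Proof.
move=> nxy; rewrite /prefers -leqNgt ltn_neqAle.
have -> : (a x != a y :> nat) by apply: contra nxy => /eqP /val_inj /perm_inj ->.
by [].
Qed.

Definition G a b (x y : 'I_m) : F := (prefers a x y && prefers b y x)%:R.

Lemma swap_sum a b : (swap_dist a b)%:R =
  \sum_(x : 'I_m) \sum_(y : 'I_m) fw x y * ((prefers a y x) != (prefers b y x))%:R :> F.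
Proof.
rewrite /swap_dist -sum1_card big_mkcond /= natr_sum.
transitivity (\sum_(x : 'I_m) \sum_(y : 'I_m) G a b x y).
  rewrite pair_big /=; apply: eq_bigr => -[x y] _; rewrite inE /G /=.
  by case: ifP.
transitivity (\sum_(x : 'I_m) \sum_(y : 'I_m) (fw x y * G a b x y + fw y x * G a b x y)).
  apply: eq_bigr => x _; apply: eq_bigr => y _; rewrite /fw.
  case: (ltngtP (val x) (val y)) => h /=; rewrite ?mul0r ?mul1r ?addr0 ?add0r //.
  have -> : x = y by apply: val_inj.
  by rewrite /G prefers_irr.
rewrite (eq_bigr (fun x => \sum_(y : 'I_m) fw x y * G a b x y + \sum_(y : 'I_m) fw y x * G a b x y)); last by move=> x _; rewrite big_split.
rewrite big_split /= [X in _ + X]exchange_big /= -big_split /=.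
apply: eq_bigr => x _; rewrite -big_split /=; apply: eq_bigr => y _.
rewrite -mulrDr /fw; case: (ltnP x y) => h; rewrite ?mul0r ?mul1r //.
have nxy : x != y by apply/eqP => exy; rewrite exy ltnn in h.
rewrite /G (@prefers_asym a x y nxy) (@prefers_asym b x y nxy).
by case: (prefers a y x); case: (prefers b y x); rewrite /= ?addr0 ?add0r.
Qed.

Definition sw a b : F := (swap_dist a b)%:R.
Definition Nn : F := \sum_(x : 'I_m) \sum_(y : 'I_m) fw x y.
Definition uu t : F := \sum_(x : 'I_m) \sum_(y : 'I_m) fw x y * E t x y.

Lemma fw_ge0 x y : 0 <= fw x y. Proof. by rewrite /fw ler0n. Qed.
Lemma E_ge0 a x y : 0 <= E a x y. Proof. by rewrite /E ler0n. Qed.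

Lemma pref1 (x y : 'I_m) : prefers (1%g : ranking m) x y = (x < y)%N.
Proof. by rewrite /prefers !perm1. Qed.

Lemma sw_shift a t : sw a t = sw a 1%g +
  \sum_(x : 'I_m) \sum_(y : 'I_m) fw x y * E t x y * (1 - 2 * E a x y).
Proof.
rewrite /sw !swap_sum -big_split; apply: eq_bigr => x _.
rewrite -big_split; apply: eq_bigr => y _.
rewrite /fw /E pref1; case: (ltnP x y) => h /=.
  rewrite (leq_gtF (ltnW h)) mul1r.
  by case: (prefers a y x); case: (prefers t y x); rewrite /=; ring.
by rewrite !mul0r add0r.
Qed.

Lemma sw_diff a t : sw a t - sw a 1%g =
  \sum_(x : 'I_m) \sum_(y : 'I_m) fw x y * E t x y * (1 - 2 * E a x y).
Proof. by rewrite sw_shift addrAC subrr add0r. Qed.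

Lemma sw1 t : sw 1%g t = uu t.
Proof.
rewrite /sw swap_sum /uu; apply: eq_bigr => x _; apply: eq_bigr => y _.
rewrite /fw /E pref1; case: (ltnP x y) => h /=.
  by rewrite (leq_gtF (ltnW h)); case: (prefers t y x).
by rewrite !mul0r.
Qed.

Lemma sq_ge (a b : nat) : (a%:R - b%:R : F) <= (a%:R - b%:R) ^+ 2.
Proof.
case: (leqP b a) => h.
  rewrite -natrB // -natrX ler_nat.
  case: (a - b)%N => // c; by rewrite expnS leq_pmulr.
apply: le_trans (sqr_ge0 _); rewrite subr_le0 ler_nat; exact: ltnW.
Qed.

Section Main.
Variables (I : finType) (vf : I -> ranking m) (wf : I -> F) (p Qm : F) (rv : ranking m).
Hypothesis hrv : forall x y : 'I_m, prefers rv x y = (y < x)%N.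
Hypothesis hw : forall i, 0 <= wf i.
Hypothesis hp : 0 < p.
Hypothesis hQ : forall x y : 'I_m, (x < y)%N ->
  Qm <= \sum_i wf i * (2 * sw (vf i) 1%g + 1) * (1 - 2 * E (vf i) x y).
Hypothesis hN : 2 * p * Nn < Qm + p.

Definition PP : {ffun ranking m -> F} :=
  [ffun r => p * (r == rv)%:R + \sum_i wf i * (r == vf i)%:R].

Lemma cost_expand t : sqkemeny_cost PP t =
  p * sw rv t ^+ 2 + \sum_i wf i * sw (vf i) t ^+ 2.
Proof.
rewrite /sqkemeny_cost.
rewrite (eq_bigr (fun r => p * (r == rv)%:R * sw r t ^+ 2 +
   \sum_i wf i * (r == vf i)%:R * sw r t ^+ 2)); last first.
  by move=> r _; rewrite ffunE mulrDl mulr_suml natrX.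
rewrite big_split /= exchange_big /=; congr (_ + _).
  rewrite (bigD1 rv) //= eqxx mulr1 big1 ?addr0 // => r /negbTE ->.
  by rewrite mulr0 mul0r.
apply: eq_bigr => i _.
rewrite (bigD1 (vf i)) //= eqxx mulr1 big1 ?addr0 // => r /negbTE ->.
by rewrite mulr0 mul0r.
Qed.

Lemma swrv t : sw rv t = Nn - uu t.
Proof.
rewrite /sw swap_sum /Nn /uu -sumrB; apply: eq_bigr => x _.
rewrite -sumrB; apply: eq_bigr => y _.
rewrite /fw /E hrv; case: (ltnP x y) => h /=.
  by case: (prefers t y x); rewrite /=; ring.
by rewrite !mul0r subr0.
Qed.

Lemma cost_gap t : 1 <= uu t -> sqkemeny_cost PP 1%g < sqkemeny_cost PP t.
Proof.
move=> hu.
rewrite !cost_expand !swrv.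
have -> : uu 1%g = 0.
  rewrite /uu big1 // => x _; rewrite big1 // => y _.
  rewrite /fw /E pref1; case: (ltnP x y) => h /=; [by rewrite (leq_gtF (ltnW h)) mulr0 | by rewrite mul0r].
set u := uu t.
have key : \sum_i wf i * sw (vf i) 1%g ^+ 2 + u * Qm <= \sum_i wf i * sw (vf i) t ^+ 2.
  have h1 : u * Qm <= \sum_i wf i * (2 * sw (vf i) 1%g + 1) * (sw (vf i) t - sw (vf i) 1%g).
    set Mid := (\sum_(x : 'I_m) \sum_(y : 'I_m) fw x y * E t x y *
        \sum_i wf i * (2 * sw (vf i) 1%g + 1) * (1 - 2 * E (vf i) x y)).
    have hmid : u * Qm <= Mid.
      rewrite /u /uu mulr_suml; apply: ler_sum => x _; rewrite mulr_suml; apply: ler_sum => y _.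
      rewrite /fw; case: (ltnP x y) => h /=; last by rewrite !mul0r.
      by rewrite !mul1r ler_wpM2l ?E_ge0 // hQ.
    apply: le_trans hmid _.
    rewrite le_eqVlt; apply/orP; left; apply/eqP.
    under [RHS]eq_bigr do rewrite sw_diff mulr_sumr.
    rewrite exchange_big /=; apply: eq_bigr => x _.
    under [RHS]eq_bigr do rewrite mulr_sumr.
    rewrite exchange_big /=; apply: eq_bigr => y _.
    rewrite mulr_sumr; apply: eq_bigr => i _; ring.
  rewrite -lerBrDl -sumrB; apply: le_trans h1 _; apply: ler_sum => i _.
  rewrite -mulrBr -mulrA; apply: ler_wpM2l; first exact: hw.
  set a := sw (vf i) t; set b := sw (vf i) 1%g.
  have := sq_ge (swap_dist (vf i) t) (swap_dist (vf i) 1%g); rewrite -/(sw _ _) -/a -/b.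
  move=> hsq; nra.
have h2 : p <= p * u by rewrite -[X in X <= _]mulr1 ler_wpM2l // ltW.
have h3 : 0 < u * (p * u - 2 * p * Nn + Qm).
  apply: mulr_gt0; first by apply: lt_le_trans hu; exact: ltr01.
  have hN1 : 2 * (p * Nn) < Qm + p by rewrite mulrA.
  rewrite -mulrA; move: (p * u) (p * Nn) h2 hN1 => a b h2 hN1; lra.
rewrite subr0; nra.
Qed.

Lemma winner_util t : sqkemeny_winner PP t -> utility rv t = 0%N.
Proof.
move=> hwin; apply/eqP; rewrite eqn0Ngt; apply/negP => hpos.
have hu : 1 <= uu t.
  case/card_gt0P: hpos => -[x y]; rewrite inE /= hrv => /andP [hyx htxy].
  have hf : fw y x * E t y x = 1 by rewrite /fw /E hyx htxy mul1r.
  have hge : forall (c d : 'I_m), 0 <= fw c d * E t c d by move=> c d; rewrite mulr_ge0 ?fw_ge0 ?E_ge0.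
  rewrite /uu (bigD1 y) //= (bigD1 x) //= hf -addrA lerDl.
  by rewrite addr_ge0 // sumr_ge0 // => c _; rewrite ?hge // sumr_ge0.
have := hwin 1%g; have := @cost_gap t hu.
by rewrite ltNge => /negP.
Qed.

Lemma PP_sum : \sum_r PP r = p + \sum_i wf i.
Proof.
rewrite (eq_bigr (fun r => p * (r == rv)%:R + \sum_i wf i * (r == vf i)%:R)); last by move=> r _; rewrite ffunE.
rewrite big_split /= exchange_big /=; congr (_ + _).
  rewrite (bigD1 rv) //= eqxx mulr1 big1 ?addr0 // => r /negbTE ->.
  by rewrite mulr0.
apply: eq_bigr => i _.
rewrite (bigD1 (vf i)) //= eqxx mulr1 big1 ?addr0 // => r /negbTE ->.
by rewrite mulr0.
Qed.

Lemma PP_ge0 r : 0 <= PP r.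
Proof.
rewrite ffunE addr_ge0 ?mulr_ge0 ?ler0n ?(ltW hp) // sumr_ge0 // => i _.
by rewrite mulr_ge0 ?ler0n.
Qed.

Lemma PP_prof : p + \sum_i wf i = 1 -> is_profile PP.
Proof.
move=> h1; split; last by rewrite PP_sum.
move=> r; rewrite PP_ge0 /=; rewrite -h1 -PP_sum (bigD1 r) //= lerDl.
by rewrite sumr_ge0 // => r' _; exact: PP_ge0.
Qed.

Lemma PP_rv : (forall i, vf i != rv) -> PP rv = p.
Proof.
move=> hne; rewrite ffunE eqxx mulr1 big1 ?addr0 // => i _.
by rewrite eq_sym (negbTE (hne i)) mulr0.
Qed.

End Main.
Lemma sw_1r a : sw a 1%g = \sum_(x : 'I_m) \sum_(y : 'I_m) fw x y * E a x y.
Proof.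
rewrite /sw swap_sum; apply: eq_bigr => x _; apply: eq_bigr => y _.
rewrite /fw /E pref1; case: (ltnP x y) => h /=.
  by rewrite (leq_gtF (ltnW h)); case: (prefers a y x).
by rewrite !mul0r.
Qed.

Lemma sum_delta (f : 'I_m -> F) j : \sum_(y : 'I_m) f y * (y == j)%:R = f j.
Proof.
rewrite (bigD1 j) //= eqxx mulr1 big1 ?addr0 // => y /negbTE ->.
by rewrite mulr0.
Qed.

End Gen.

Lemma sum_gt (F : realType) (m j : nat) :
  \sum_(y < m) ((j < y)%N%:R : F) = (m - j.+1)%:R.
Proof.
elim: m => [|m IH]; first by rewrite big_ord0 sub0n.
rewrite big_ord_recr /= IH -natrD; congr (_%:R); case: (ltnP j m) => h /=; lia.
Qed.

Lemma sum_lt (F : realType) (m j : nat) :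
  \sum_(y < m) ((y < j)%N%:R : F) = (minn j m)%:R.
Proof.
elim: m => [|m IH]; first by rewrite big_ord0 minn0.
rewrite big_ord_recr /= IH -natrD; congr (_%:R); case: (ltnP m j) => h /=; lia.
Qed.

Lemma Nn_bin (F : realType) (m : nat) : Nn F m = ('C(m, 2))%:R.
Proof.
rewrite /Nn (eq_bigr (fun x : 'I_m => ((m - x.+1)%N%:R : F))); last first.
  by move=> x _; rewrite /fw sum_gt.
rewrite (reindex_inj rev_ord_inj) /=.
rewrite (eq_bigr (fun x : 'I_m => ((x : nat)%:R : F))); last first.
  move=> x _; congr (_%:R); have := ltn_ord x; lia.
by rewrite -natr_sum -bin2_sum big_mkord.
Qed.


Section Conc.
Variable n : nat.
Local Notation m := n.+1.

Definition topn (j x : 'I_m) : nat :=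
  if (x == j :> nat) then 0 else if (x < j)%N then x.+1 else x.
Definition botn (j x : 'I_m) : nat :=
  if (x == j :> nat) then n else if (j < x)%N then x.-1 else x.

Definition topf (j x : 'I_m) : 'I_m := inord (topn j x).
Definition botf (j x : 'I_m) : 'I_m := inord (botn j x).

Lemma topf_val j x : (topf j x : nat) = topn j x.
Proof.
rewrite /topf inordK // /topn; have := ltn_ord x; have := ltn_ord j.
move=> hj hx; by case: ifP => h1; [lia | case: ifP => h2; lia].
Qed.

Lemma botf_val j x : (botf j x : nat) = botn j x.
Proof.
rewrite /botf inordK // /botn; have := ltn_ord x; have := ltn_ord j.
move=> hj hx; by case: ifP => h1; [lia | case: ifP => h2; lia].
Qed.

Lemma topf_inj j : injective (topf j).
Proof.
move=> x y /(congr1 (@nat_of_ord _)); rewrite !topf_val /topn => h; apply: val_inj => /=.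
move: h; have := ltn_ord x; have := ltn_ord y; move=> hx hy.
repeat (case: ifP => ?); lia.
Qed.

Lemma botf_inj j : injective (botf j).
Proof.
move=> x y /(congr1 (@nat_of_ord _)); rewrite !botf_val /botn => h; apply: val_inj => /=.
move: h; have := ltn_ord x; have := ltn_ord y; move=> hx hy.
repeat (case: ifP => ?); lia.
Qed.

Definition topp j : ranking m := perm (@topf_inj j).
Definition botp j : ranking m := perm (@botf_inj j).
Definition revp : ranking m := perm (@rev_ord_inj m).

Lemma revp_pref x y : prefers revp x y = (y < x)%N.
Proof.
rewrite /prefers !permE /=; have := ltn_ord x; have := ltn_ord y.
case: (ltnP y x) => h *; lia.
Qed.

Lemma topp_pref (j x y : 'I_m) : (x < y)%N -> prefers (topp j) y x = (y == j :> nat).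
Proof.
case: (@eqP nat y j) => hyj;
move=> hxy; rewrite /prefers !permE !topf_val /topn; have := ltn_ord x; have := ltn_ord y; have := ltn_ord j;
move=> hj hy hx; repeat (case: ifP => ?); first [ by apply/idP; lia | by apply/negbTE/negP => ?; lia | lia].
Qed.

Lemma botp_pref (j x y : 'I_m) : (x < y)%N -> prefers (botp j) y x = (x == j :> nat).
Proof.
case: (@eqP nat x j) => hyj;
move=> hxy; rewrite /prefers !permE !botf_val /botn; have := ltn_ord x; have := ltn_ord y; have := ltn_ord j;
move=> hj hy hx; repeat (case: ifP => ?); first [ by apply/idP; lia | by apply/negbTE/negP => ?; lia | lia].
Qed.

End Conc.
Arguments topp {n}.
Arguments botp {n}.
Arguments revp {n}.

Section Assemble.
Variable F : realType.
Variable n : nat.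
Local Notation m := n.+1.

Lemma k_top (j : 'I_m) : sw F _ (topp j) 1%g = (j : nat)%:R.
Proof.
rewrite sw_1r (eq_bigr (fun x : 'I_m => \sum_(y : 'I_m) fw F _ x y * ((y == j)%:R))); last first.
  move=> x _; apply: eq_bigr => y _; rewrite /fw /E; case: (ltnP x y) => h /=; last by rewrite !mul0r.
  by rewrite topp_pref.
under eq_bigr do rewrite sum_delta.
by rewrite /fw sum_lt (minn_idPl (ltnW (ltn_ord j))).
Qed.

Lemma k_bot (j : 'I_m) : sw F _ (botp j) 1%g = (n - j)%:R.
Proof.
rewrite sw_1r (eq_bigr (fun x : 'I_m => (\sum_(y : 'I_m) fw F _ x y) * ((x == j)%:R))); last first.
  move=> x _; rewrite mulr_suml; apply: eq_bigr => y _; rewrite /fw /E; case: (ltnP x y) => h /=; last by rewrite !mul0r.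
  by rewrite botp_pref.
rewrite sum_delta /fw sum_gt; congr (_%:R); lia.
Qed.


Definition vf (i : bool * 'I_m) : ranking m := if i.1 then topp i.2 else botp i.2.
Definition kk (i : bool * 'I_m) : nat := if i.1 then (i.2 : nat) else (n - i.2)%N.

Lemma sw_vf i : sw F _ (vf i) 1%g = (kk i)%:R.
Proof. by case: i => -[] j; rewrite /vf /kk /= ?k_top ?k_bot. Qed.

Lemma sum_pair (G : bool * 'I_m -> F) :
  \sum_p G p = \sum_(j : 'I_m) G (true, j) + \sum_(j : 'I_m) G (false, j).
Proof.
transitivity (\sum_(b : bool) \sum_(j : 'I_m) G (b, j)); last by rewrite big_bool.
by rewrite pair_bigA; apply: eq_bigr => -[b j].
Qed.

Lemma sum_rev (h : nat -> F) : \sum_(j : 'I_m) h (n - j)%N = \sum_(j : 'I_m) h j.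
Proof.
rewrite (reindex_inj rev_ord_inj) /=; apply: eq_bigr => j _; congr h.
have := ltn_ord j; lia.
Qed.

Lemma Qval (g : nat -> F) (x y : 'I_m) : (x < y)%N ->
  \sum_i g (kk i) * (2 * sw F _ (vf i) 1%g + 1) * (1 - 2 * E F _ (vf i) x y) =
  (\sum_(j : 'I_m) g j * (2 * (j : nat)%:R + 1) - 2 * (g y * (2 * (y : nat)%:R + 1))) +
  (\sum_(j : 'I_m) g j * (2 * (j : nat)%:R + 1) - 2 * (g (n - x)%N * (2 * (n - x)%N%:R + 1))).
Proof.
move=> hxy; rewrite sum_pair; congr (_ + _).
  rewrite (eq_bigr (fun j : 'I_m => g j * (2 * (j : nat)%:R + 1) - 2 * (g j * (2 * (j : nat)%:R + 1) * ((j == y)%:R)))); last first.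
    move=> j _; rewrite sw_vf /kk /E /vf /= topp_pref // eq_sym val_eqE; ring.
  by rewrite sumrB -mulr_sumr (sum_delta F _ (fun j : 'I_m => g j * (2 * (j : nat)%:R + 1))).
rewrite -(sum_rev (fun k => g k * (2 * k%:R + 1))).
rewrite (eq_bigr (fun j : 'I_m => g (n - j)%N * (2 * (n - j)%N%:R + 1) - 2 * (g (n - j)%N * (2 * (n - j)%N%:R + 1) * ((j == x)%:R)))); last first.
  move=> j _; rewrite sw_vf /kk /E /vf /= botp_pref // eq_sym val_eqE; ring.
by rewrite sumrB -mulr_sumr (sum_delta F _ (fun j : 'I_m => g (n - j)%N * (2 * (n - j)%N%:R + 1))).
Qed.


Lemma vf_ne (i : bool * 'I_m) : (2 <= n)%N -> vf i != revp.
Proof.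
move=> hn; case: i => -[] j; rewrite /vf /=; apply/eqP => heq.
  have := congr1 (fun r : ranking m => (r ord0 : nat)) heq; rewrite /= !permE /= topf_val /topn /=.
  by repeat case: ifP => ? /=; move=> ?; lia.
have := congr1 (fun r : ranking m => (r ord_max : nat)) heq; rewrite /= !permE /= (botf_val n j ord_max) /botn /=.
have := ltn_ord j; move=> hj; by repeat case: ifP => ? /=; move=> ?; lia.
Qed.

Lemma assemble (g : nat -> F) (M p : F) :
  (2 <= n)%N -> 0 < p -> (forall k, 0 <= g k) ->
  p + 2 * \sum_(j : 'I_m) g j = 1 ->
  (forall k, (k < m)%N -> g k * (2 * k%:R + 1) <= M) ->
  2 * p * ('C(m,2))%:R < 2 * \sum_(j : 'I_m) g j * (2 * (j : nat)%:R + 1) - 4 * M + p ->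
  exists (P : {ffun ranking m -> F}) (s : ranking m),
    [/\ is_profile P, P s = p & forall t, sqkemeny_winner P t -> utility s t = 0%N].
Proof.
move=> hn hp hg hsum hM hcrit.
have hw : forall i, 0 <= g (kk i) by move=> i; exact: hg.
have hrv : forall x y : 'I_m, prefers revp x y = (y < x)%N by move=> x y; exact: revp_pref.
set S := \sum_(j : 'I_m) g j * (2 * (j : nat)%:R + 1).
have hQ : forall x y : 'I_m, (x < y)%N ->
  2 * S - 4 * M <= \sum_i g (kk i) * (2 * sw F _ (vf i) 1%g + 1) * (1 - 2 * E F _ (vf i) x y).
  move=> x y hxy; rewrite Qval // -/S.
  have h1 := hM y (ltn_ord y).
  have h2 : g (n - x)%N * (2 * (n - x)%N%:R + 1) <= M by apply: hM; lia.
  lra.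
have hN : 2 * p * Nn F m < 2 * S - 4 * M + p by rewrite Nn_bin.
exists (PP F _ _ vf (fun i => g (kk i)) p revp), revp; split.
- apply: PP_prof => //; rewrite sum_pair /kk /=.
  by rewrite (sum_rev (fun k => g k)) -hsum; congr (_ + _); ring.
- by apply: PP_rv => i; exact: vf_ne.
- move=> t; exact: (winner_util _ _ _ _ _ _ _ _ hrv hw hp hQ hN).
Qed.

End Assemble.

Lemma C2 k : ('C(k.+1, 2) * 2 = k.+1 * k)%N.
Proof.
elim: k => [|k IH]; first by [].
rewrite binS bin1 mulnDl IH; lia.
Qed.

Lemma sum_odd (F : realType) n :
  \sum_(j < n) (2 * (j.+1)%:R + 1 : F) = (n * n + 2 * n)%N%:R.
Proof.
elim: n => [|n IH]; first by rewrite big_ord0.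
rewrite big_ord_recr /= IH.
rewrite !(natrD, natrM) -!natr1 ?(natrD, natrM); ring.
Qed.

Lemma case_big (F : realType) (n : nat) : (5 <= n)%N ->
  exists (P : {ffun ranking n.+1 -> F}) (s : ranking n.+1),
    [/\ is_profile P, P s = (n.+1%:R / 5) / ('C(n.+1, 2))%:R
      & forall t : ranking n.+1, sqkemeny_winner P t -> utility s t = 0%N].
Proof.
move=> hn.
set p := (n.+1%:R / 5) / ('C(n.+1, 2))%:R : F.
have hN : (5 : F) <= n%:R by rewrite ler_nat.
have hN0 : n%:R != 0 :> F by rewrite pnatr_eq0; lia.
have hC : ('C(n.+1, 2))%:R = ((n.+1)%:R * n%:R / 2 : F).
  by rewrite -natrM -C2 natrM mulfK // pnatr_eq0.
have hp : p = 2 / (5 * n%:R).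
  rewrite /p hC; field; rewrite hN0 /=; apply/negP => /eqP h0; lra.
have hp0 : 0 < p by rewrite hp divr_gt0 //; nra.
have hp1 : p < 1 by rewrite hp ltr_pdivrMr; nra.
set c := (1 - p) / (2 * n%:R).
have hc : 0 <= c by rewrite /c divr_ge0 //; [lra | nra].
apply: (assemble F n (fun k => if k == 0%N then 0 else c) (c * (2 * n%:R + 1)) p).
- lia.
- exact: hp0.
- by move=> k; case: ifP.
- rewrite big_ord_recl /= sumr_const card_ord -mulr_natr /c add0r; field; exact: hN0.
- move=> k hk; case: ifP => _.
    by rewrite mul0r mulr_ge0 // addr_ge0 // mulr_ge0 // ler0n.
  apply: ler_wpM2l => //; rewrite lerD2r ler_wpM2l // ler_nat; lia.
- rewrite big_ord_recl /= mul0r add0r.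
  rewrite (eq_bigr (fun j : 'I_n => c * (2 * (j.+1)%:R + 1))); last by move=> j _.
  rewrite -mulr_sumr sum_odd.
  rewrite hC /c hp -[n.+1%:R]natr1 natrD !natrM -subr_gt0.
  set N := n%:R.
  rewrite [X in 0 < X](_ : _ = (3 * N ^+ 3 - 14 * N ^+ 2 - 4 * N + 4) / (5 * N ^+ 2)); last by field.
  apply: divr_gt0; last by nra.
  have h1 : 1 <= 3 * N - 14 by lra.
  nra.
Qed.


Lemma case5 (F : realType) :
  exists (P : {ffun ranking 5 -> F}) (s : ranking 5),
    [/\ is_profile P, P s = (5%:R / 5) / ('C(5, 2))%:R
      & forall t : ranking 5, sqkemeny_winner P t -> utility s t = 0%N].
Proof.
set p := (5%:R / 5) / ('C(5, 2))%:R : F.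
have hp : p = 1 / 10.
  by rewrite /p (_ : 'C(5,2) = 10)%N //; field.
set c : F := 567 / 992.
apply: (assemble F 4 (fun k => if k == 0%N then 0 else c / (2 * k%:R + 1)) c p).
- by [].
- rewrite hp; lra.
- move=> k; case: ifP => // _; rewrite divr_ge0 // ?addr_ge0 ?mulr_ge0 ?ler0n //.
  by rewrite /c; lra.
- rewrite !big_ord_recr big_ord0 /= hp /c; field; by [].
- move=> k hk; case: ifP => _.
    by rewrite mul0r /c; lra.
  by rewrite mulfVK ?lexx // gt_eqF // ltr_wpDl // mulr_ge0 ?ler0n.
- rewrite !big_ord_recr big_ord0 /= hp /c.
  have -> : 'C(5, 2) = 10%N by [].
  rewrite -subr_gt0 [X in 0 < X](_ : _ = 479 / 1240); last by field.
  lra.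
Qed.


Theorem mainTheorem1 (F : realType) (m : nat) (hm : (5 <= m)%N) :
  exists (P : {ffun ranking m -> F}) (s : ranking m),
    [/\ is_profile P,
        P s = (m%:R / 5) / ('C(m, 2))%:R
      & forall t : ranking m, sqkemeny_winner P t -> utility s t = 0%N].
Proof.
case: m hm => [//|n] hm.
case: (ltngtP n 4) => h.
- lia.
- exact: case_big.
- subst n; exact: case5.
Qed.
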